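(* Let $\Omega$ be a finite nonempty set, $\mathcal{A}=2^\Omega$, and let $\mu$ be a $q$-measure on $\mathcal{A}$. If $\phi$ and $\psi$ are quadratic coevents on $\mathcal{A}$ that are both 1-generated by $\mu$, then $\phi=\psi$.
   Context: Let $\Omega$ be a finite nonempty set and $\mathcal{A}=2^\Omega$. A coevent is a map $\phi:\mathcal{A}\to\{0,1\}$ with $\phi(\emptyset)=0$. A coevent $\phi$ is quadratic if for all pairwise disjoint $A,B,C\in\mathcal{A}$: $\phi(A\cup B\cup C)=\phi(A\cup B)\oplus\phi(A\cup C)\oplus\phi(B\cup C)\oplus\phi(A)\oplus\phi(B)\oplus\phi(C)$, where $\oplus$ is addition mod 2. For $f:\Omega\to[0,\infty)$ and a coevent $\phi$, the $q$-integral is $\int f\,d\phi=\int_0^\infty \phi(\{\omega\in\Omega: f(\omega)>\lambda\})\,d\lambda$ (Lebesgue measure in $\lambda$), and for $A\in\mathcal{A}$, $\int_A f\,d\phi=\int f\chi_A\,d\phi$. A $q$-measure is a map $\mu:\mathcal{A}\to[0,\infty)$ such that for all pairwise disjoint $A,B,C\in\mathcal{A}$: $\mu(A\cup B\cup C)=\mu(A\cup B)+\mu(A\cup C)+\mu(B\cup C)-\mu(A)-\mu(B)-\mu(C)$. The $q$-measure $\mu$ 1-generates $\phi$ if there is a function $f:\Omega\to(0,\infty)$ with $\mu(A)=\int_A f\,d\phi$ for all $A\in\mathcal{A}$. *)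

(* Defs.v *)
From mathcomp Require Import all_boot.
From Stdlib Require Import Reals.
Set Implicit Arguments. Unset Strict Implicit. Unset Printing Implicit Defensive.

Local Open Scope R_scope.

Definition Rltb (x y : R) : bool := if Rlt_dec x y then true else false.

(* coevent: phi : 2^Omega -> {0,1} (booleans, true = 1) with phi(empty) = 0 *)
Definition coevent (T : finType) (phi : {set T} -> bool) : Prop :=
  phi set0 = false.

Definition quadratic (T : finType) (phi : {set T} -> bool) : Prop :=
  forall A B C : {set T},
    [disjoint A & B] -> [disjoint A & C] -> [disjoint B & C] ->
    phi (A :|: B :|: C) =
      xorb (xorb (xorb (xorb (xorb (phi (A :|: B)) (phi (A :|: C)))
                               (phi (B :|: C))) (phi A)) (phi B)) (phi C).

Definition qmeasure (T : finType) (mu : {set T} -> R) : Prop :=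
  (forall A, 0 <= mu A) /\
  forall A B C : {set T},
    [disjoint A & B] -> [disjoint A & C] -> [disjoint B & C] ->
    mu (A :|: B :|: C) =
      mu (A :|: B) + mu (A :|: C) + mu (B :|: C) - mu A - mu B - mu C.

Definition level (T : finType) (phi : {set T} -> bool) (f : T -> R) (l : R) : R :=
  if phi [set w | Rltb l (f w)] then 1 else 0.

(* r is the q-integral  \int_0^\infty phi({f > lambda}) d lambda.
   For f >= 0 on a finite set the integrand vanishes for lambda >= max f
   (phi(empty)=0), so the integral over [0,oo) is the integral over [0,M]
   for any M >= max f, M >= 0; the integrand is a step function, so the
   Riemann integral coincides with the Lebesgue integral. *)
Definition is_qint (T : finType) (phi : {set T} -> bool) (f : T -> R) (r : R) : Prop :=
  forall M : R, 0 <= M -> (forall w, f w <= M) ->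
    exists pr : Riemann_integrable (level phi f) 0 M, RiemannInt pr = r.

Definition restr (T : finType) (f : T -> R) (A : {set T}) : T -> R :=
  fun w => if w \in A then f w else 0.

Definition one_generates (T : finType) (mu : {set T} -> R) (phi : {set T} -> bool) : Prop :=
  exists f : T -> R, (forall w, 0 < f w) /\
    forall A : {set T}, is_qint phi (restr f A) (mu A).

(* Main.v *)
Require Import Defs.
From mathcomp Require Import all_boot.
From Stdlib Require Import Reals Lra.
From Coquelicot Require Import Coquelicot.

Local Open Scope R_scope.

Lemma step3 (h : R -> R) (c d M v1 v2 : R) :
  0 <= c -> c <= d -> d <= M ->
  (forall x, 0 < x < c -> h x = v1) ->
  (forall x, c < x < d -> h x = v2) ->
  (forall x, d < x < M -> h x = 0) ->
  is_RInt h 0 M (c*v1 + (d-c)*v2).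
Proof.
  intros Hc Hcd HdM H1 H2 H3.
  assert (I1 : is_RInt h 0 c (c*v1)).
  { apply is_RInt_ext with (fun _ => v1).
    - intros x; rewrite Rmin_left ?Rmax_right; try lra. intros Hx; symmetry; apply H1; exact Hx.
    - replace (c*v1) with (scal (c-0) v1). exact (@is_RInt_const R_NormedModule _ _ _).
      change (@eq R ((c-0)*v1) (c*v1)); ring. }
  assert (I2 : is_RInt h c d ((d-c)*v2)).
  { apply is_RInt_ext with (fun _ => v2).
    - intros x; rewrite Rmin_left ?Rmax_right; try lra. intros Hx; symmetry; apply H2; exact Hx.
    - replace ((d-c)*v2) with (scal (d-c) v2). exact (@is_RInt_const R_NormedModule _ _ _).
      change (@eq R ((d-c)*v2) ((d-c)*v2)); ring. }
  assert (I3 : is_RInt h d M 0).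
  { apply is_RInt_ext with (fun _ => 0).
    - intros x; rewrite Rmin_left ?Rmax_right; try lra. intros Hx; symmetry; apply H3; exact Hx.
    - have K := @is_RInt_const R_NormedModule d M 0.
      rewrite scal_zero_r in K; exact K. }
  replace (c*v1+(d-c)*v2) with (plus (plus (c*v1) ((d-c)*v2)) 0).
  - apply (@is_RInt_Chasles R_NormedModule) with d; [apply (@is_RInt_Chasles R_NormedModule) with c|]; assumption.
  - change (@eq R ((c*v1 + (d-c)*v2) + 0) (c*v1+(d-c)*v2)); ring.
Qed.

Lemma qint_val (T : finType) (phi : {set T} -> bool) g r M v :
  is_qint phi g r -> 0 <= M -> (forall w, g w <= M) ->
  is_RInt (level phi g) 0 M v -> r = v.
Proof.
  intros H HM Hg Hi. destruct (H M HM Hg) as [pr Hpr].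
  rewrite <- Hpr, <- RInt_Reals. apply is_RInt_unique; exact Hi.
Qed.

Lemma Rltb_t x y : x < y -> Rltb x y = true.
Proof. intros; unfold Rltb; destruct Rlt_dec; [reflexivity|lra]. Qed.
Lemma Rltb_f x y : ~ x < y -> Rltb x y = false.
Proof. intros; unfold Rltb; destruct Rlt_dec; [lra|reflexivity]. Qed.

Definition b2R (b : bool) : R := if b then 1 else 0.

Lemma set_lvl (T : finType) (f : T -> R) A l : 0 < l ->
  [set v | Rltb l (restr f A v)] = [set v in A | Rltb l (f v)].
Proof.
  intros Hl; apply/setP => v; rewrite !inE /restr; case: (v \in A) => //=.
  apply Rltb_f; lra.
Qed.

Lemma single_val (T : finType) (phi : {set T} -> bool) f w m :
  coevent phi -> 0 < f w -> is_qint phi (restr f [set w]) m ->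
  m = f w * b2R (phi [set w]).
Proof.
  intros Hco Hf H.
  rewrite (qint_val _ _ _ _ (f w) (f w * b2R (phi [set w]) + (f w - f w) * 0) H).
  - ring.
  - lra.
  - intros v; rewrite /restr; case: (boolP (v \in [set w])) => [/set1P ->|_]; lra.
  - apply step3; try lra.
    + intros x Hx; unfold level, b2R; rewrite set_lvl; [|lra].
      have -> : [set v in [set w] | Rltb x (f v)] = [set w]; [|reflexivity].
      apply/setP => v; rewrite !inE; case: eqP => [->|_] //=; apply Rltb_t; lra.
    + intros x Hx; lra.
    + intros x Hx; lra.
Qed.

Lemma pair_val (T : finType) (phi : {set T} -> bool) f a b m :
  coevent phi -> a != b -> 0 < f a -> f a <= f b ->
  is_qint phi (restr f [set a; b]) m ->
  m = f a * b2R (phi [set a; b]) + (f b - f a) * b2R (phi [set b]).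
Proof.
  intros Hco Hab Hf Hfab H.
  apply (qint_val _ _ _ _ (f b) _ H).
  - lra.
  - intros v; rewrite /restr; case: (boolP (v \in [set a; b])) => [|_]; [|lra].
    rewrite !inE; case/orP => /eqP ->; lra.
  - apply step3; try lra.
    + intros x Hx; unfold level, b2R; rewrite set_lvl; [|lra].
      have -> : [set v in [set a; b] | Rltb x (f v)] = [set a; b]; [|reflexivity].
      apply/setP => v; rewrite !inE; case: (v =P a) => [->|_] /=;
        [rewrite ?eqxx /=; apply Rltb_t; lra|].
      case: (v =P b) => [->|_] //=; rewrite ?eqxx ?orbT /=; apply Rltb_t; lra.
    + intros x Hx; unfold level, b2R; rewrite set_lvl; [|lra].
      have -> : [set v in [set a; b] | Rltb x (f v)] = [set b]; [|reflexivity].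
      apply/setP => v; rewrite !inE; case: (v =P a) => [->|_] /=.
      * rewrite (negbTE Hab) Rltb_f //; lra.
      * case: (v =P b) => [->|_]; rewrite ?andbT ?andbF //; apply Rltb_t; lra.
    + intros x Hx; unfold level, b2R; rewrite set_lvl; [|lra].
      have -> : [set v in [set a; b] | Rltb x (f v)] = set0; [|rewrite Hco; reflexivity].
      apply/setP => v; rewrite !inE; case: (v =P a) => [->|_] /=;
        [rewrite Rltb_f ?andbF //; lra|].
      case: (v =P b) => [->|_] //=; rewrite Rltb_f //; lra.
Qed.

Definition Q (pa pb : bool) (ma mb m : R) : Prop :=
  match pa, pb with
  | false, false => m <> 0
  | true, false => m = ma
  | false, true => m = mb
  | true, true => m = Rmax ma mb
  end.

Lemma Q_sym pa pb ma mb m : Q pa pb ma mb m <-> Q pb pa mb ma m.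
Proof. destruct pa, pb; simpl; try tauto. rewrite Rmax_comm; tauto. Qed.

Lemma pair_char_le (T : finType) (mu : {set T} -> R) phi f a b :
  coevent phi -> (forall w, 0 < f w) -> (forall A, is_qint phi (restr f A) (mu A)) ->
  a != b -> f a <= f b ->
  phi [set a; b] = true <->
  Q (phi [set a]) (phi [set b]) (mu [set a]) (mu [set b]) (mu [set a; b]).
Proof.
  intros Hco Hf H Hab Hle.
  rewrite (single_val _ _ _ _ _ Hco (Hf a) (H [set a])).
  rewrite (single_val _ _ _ _ _ Hco (Hf b) (H [set b])).
  rewrite (pair_val _ _ _ _ _ _ Hco Hab (Hf a) Hle (H [set a; b])).
  have Ha := Hf a; have Hb := Hf b.
  unfold b2R; destruct (phi [set a; b]), (phi [set a]), (phi [set b]); simpl;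
    unfold Rmax; try destruct Rle_dec; split; intro HH; try reflexivity;
    try discriminate; try lra; try (intro; lra); try (exfalso; apply HH; lra);
    try (exfalso; lra).
Qed.

Lemma pair_char (T : finType) (mu : {set T} -> R) phi f a b :
  coevent phi -> (forall w, 0 < f w) -> (forall A, is_qint phi (restr f A) (mu A)) ->
  a != b ->
  phi [set a; b] = true <->
  Q (phi [set a]) (phi [set b]) (mu [set a]) (mu [set b]) (mu [set a; b]).
Proof.
  intros Hco Hf H Hab.
  destruct (Rle_dec (f a) (f b)) as [Hle|Hle].
  - exact (pair_char_le _ _ _ _ _ _ Hco Hf H Hab Hle).
  - rewrite Q_sym setUC.
    apply (pair_char_le _ _ _ _ _ _ Hco Hf H); [by rewrite eq_sym | lra].
Qed.

Lemma single_eq (T : finType) (mu : {set T} -> R) phi psi f g w :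
  coevent phi -> coevent psi -> (forall w, 0 < f w) -> (forall w, 0 < g w) ->
  (forall A, is_qint phi (restr f A) (mu A)) ->
  (forall A, is_qint psi (restr g A) (mu A)) ->
  phi [set w] = psi [set w].
Proof.
  intros Hc1 Hc2 Hf Hg H1 H2.
  have E1 := single_val _ _ _ _ _ Hc1 (Hf w) (H1 [set w]).
  have E2 := single_val _ _ _ _ _ Hc2 (Hg w) (H2 [set w]).
  have := Hf w; have := Hg w.
  unfold b2R in *; destruct (phi [set w]), (psi [set w]); intros; auto; lra.
Qed.

Close Scope R_scope.
From mathcomp Require Import zify.
From Stdlib Require Import FunctionalExtensionality.

Theorem theorem5p2 (Omega : finType) (HOmega : (0 < #|Omega|)%N)
  (mu : {set Omega} -> R) (Hmu : qmeasure mu)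
  (phi psi : {set Omega} -> bool)
  (Hphi_co : coevent phi) (Hphi_q : quadratic phi)
  (Hpsi_co : coevent psi) (Hpsi_q : quadratic psi)
  (Gphi : one_generates mu phi) (Gpsi : one_generates mu psi) :
  phi = psi.
Proof.
  destruct Gphi as [f [Hf H1]]. destruct Gpsi as [g [Hg H2]].
  have Hs : forall w, phi [set w] = psi [set w].
  { intro w; exact (single_eq _ _ _ _ _ _ _ Hphi_co Hpsi_co Hf Hg H1 H2). }
  have Hp : forall a b, a != b -> phi [set a; b] = psi [set a; b].
  { intros a b Hab.
    have E1 := pair_char _ _ _ _ _ _ Hphi_co Hf H1 Hab.
    have E2 := pair_char _ _ _ _ _ _ Hpsi_co Hg H2 Hab.
    rewrite Hs (Hs b) in E1.
    apply Bool.eq_iff_eq_true; rewrite E1 E2; tauto. }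
  suff K : forall n (A : {set Omega}), #|A| <= n -> phi A = psi A.
  { apply functional_extensionality => A; exact (K _ A (leqnn _)). }
  elim => [|n IH] A HA.
  { have /eqP/cards0_eq -> : #|A| == 0 by rewrite -leqn0.
    by rewrite Hphi_co Hpsi_co. }
  case: (leqP #|A| n) => Hn; first exact: IH.
  case Hc : #|A| => [|[|[|k]]].
  - by move: Hc => /cards0_eq ->; rewrite Hphi_co Hpsi_co.
  - by move/eqP: Hc => /cards1P [x ->].
  - by move/eqP: Hc => /cards2P [x [y [Hxy ->]]]; apply: Hp.
  - have /card_gt0P [a Ha] : 0 < #|A| by rewrite Hc.
    have HA1 := cardsD1 a A; rewrite Ha in HA1.
    have /card_gt0P [b Hb] : 0 < #|A :\ a| by lia.
    have HA2 := cardsD1 b (A :\ a); rewrite Hb in HA2.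
    set R0 := A :\ a :\ b in HA2.
    have EA : A = [set a] :|: [set b] :|: R0.
    { by rewrite -setUA /R0 (setD1K Hb) (setD1K Ha). }
    have Hab : a != b by move: Hb; rewrite !inE eq_sym; case/andP.
    have HaR : a \notin R0 by rewrite /R0 !inE eqxx andbF.
    have HbR : b \notin R0 by rewrite /R0 !inE eqxx.
    have D1 : [disjoint [set a] & [set b]] by rewrite disjoints1 inE.
    have D2 : [disjoint [set a] & R0] by rewrite disjoints1.
    have D3 : [disjoint [set b] & R0] by rewrite disjoints1.
    have CaR : #|[set a] :|: R0| = (#|R0|).+1 by rewrite cardsU1 HaR.
    have CbR : #|[set b] :|: R0| = (#|R0|).+1 by rewrite cardsU1 HbR.
    rewrite EA (Hphi_q _ _ _ D1 D2 D3) (Hpsi_q _ _ _ D1 D2 D3).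
    rewrite (Hp _ _ Hab) !Hs (IH ([set a] :|: R0)) ?CaR; last by lia.
    rewrite (IH ([set b] :|: R0)) ?CbR; last by lia.
    rewrite (IH R0) //; lia.
Qed.
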